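(* For every integer $k\ge1$, $N(2k+5,k)=1$.
   Context: For $n>k\ge1$, $N(n,k)$ is the nullity of the $n\times n$ skew-symmetric Toeplitz matrix $A(n,k)$ whose first $k$ superdiagonals have all entries $1$ and whose remaining superdiagonals have all entries $0$. *)

(* Defs.v *)
From mathcomp Require Import all_boot all_order all_algebra.
Set Implicit Arguments. Unset Strict Implicit. Unset Printing Implicit Defensive.
Import GRing.Theory Num.Theory.
Local Open Scope ring_scope.

Definition Amat (n k : nat) : 'M[rat]_n :=
  \matrix_(i < n, j < n)
    (if (i < j)%N && (j - i <= k)%N then 1
     else if (j < i)%N && (i - j <= k)%N then -1 else 0).

Definition Nnull (n k : nat) : nat := (n - \rank (Amat n k))%N.

(* Main.v *)
Require Import Defs.
From mathcomp Require Import all_boot all_order all_algebra.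
From mathcomp Require Import zify ring lra.
Import GRing.Theory Num.Theory.
Local Open Scope ring_scope.

Lemma pure (k : nat) (P : nat -> rat) :
  (1 <= k)%N ->
  P 0%N = 0 ->
  (forall m, (2*k+5 <= m)%N -> P m = 0) ->
  (forall j, (j < 2*k+5)%N -> P j - P (j - k)%N - P (j+k+1)%N + P (j+1)%N = 0) ->
  forall m, P m = 0.
Proof.
move=> k1 P0 PT HE.
pose q m := P m - P (m - k.+1)%N.
have q0 : q 0%N = 0 by rewrite /q sub0n P0 subrr.
have per : forall m, (1 <= m <= 2*k+5)%N -> q (m + k)%N = q m.
  move=> m /andP[h1 h2]; have := HE (m.-1) ltac:(lia).
  rewrite /q (_ : (m + k - k.+1 = m.-1)%N); last by lia.
  rewrite (_ : (m.-1 - k = m - k.+1)%N); last by lia.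
  rewrite (_ : (m.-1 + k + 1 = m + k)%N); last by lia.
  rewrite (_ : (m.-1 + 1 = m)%N); last by lia.
  move=> h; lra.
have Pq : forall m, P m = q m + P (m - k.+1)%N by move=> m; rewrite /q; ring.
have G : forall m, (2*k+5 <= m <= 3*k+5)%N ->
   q m + q (m - k.+1)%N + q (m - 2*k.+1)%N + q (m - 3 * k.+1)%N = 0.
  move=> m /andP[h1 h2].
  have e1 : P (m - 3 * k.+1)%N = q (m - 3 * k.+1)%N.
    rewrite /q (_ : (m - 3 * k.+1 - k.+1 = 0)%N); last by lia.
    by rewrite P0 subr0.
  have := Pq m; rewrite PT //.
  rewrite (Pq (m - k.+1)%N) (_ : (m - k.+1 - k.+1 = m - 2*k.+1)%N); last by lia.
  rewrite (Pq (m - 2*k.+1)%N) (_ : (m - 2*k.+1 - k.+1 = m - 3*k.+1)%N); last by lia.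
  rewrite e1 => h; lra.
suff qz : forall j, (1 <= j <= k)%N -> q j = 0.
  have qall : forall j, (j <= 3*k+5)%N -> q j = 0.
    elim/ltn_ind => j IH hj.
    case: (posnP j) => [->|jp]; first exact: q0.
    case: (leqP j k) => hjk; first by apply: qz; lia.
    rewrite (_ : j = (j - k) + k)%N; last by lia.
    rewrite per; last by lia.
    apply: IH; lia.
  elim/ltn_ind => m IH.
  case: (leqP (2*k+5) m) => hm; first by apply: PT.
  case: (posnP m) => [->|mp]; first exact: P0.
  rewrite Pq qall; last by lia.
  rewrite IH ?addr0 //; lia.
move=> j hj.
have W : forall r, (5 <= r <= k+3)%N -> q r + q (r-1)%N + q (r-2)%N = 0.
  move=> r hr; have := G (r + 2*k)%N ltac:(lia).
  rewrite (_ : (r + 2*k - 3*k.+1 = 0)%N); last by lia.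
  rewrite (_ : (r + 2*k = (r + k) + k)%N); last by lia.
  rewrite per; last by lia. rewrite per; last by lia.
  rewrite (_ : (r + k + k - k.+1 = (r-1) + k)%N); last by lia.
  rewrite per; last by lia.
  rewrite (_ : (r + k + k - 2*k.+1 = r-2)%N); last by lia.
  rewrite q0 addr0 => h; exact h.
have G4 : q 4%N + q 3%N + q 2%N + q 1%N = 0.
  have := G (3*k+4)%N ltac:(lia).
  rewrite (_ : (3*k+4 - 3*k.+1 = 1)%N); last by lia.
  rewrite (_ : (3*k+4 - 2*k.+1 = 2 + k)%N); last by lia.
  rewrite (_ : (3*k+4 - k.+1 = (3 + k) + k)%N); last by lia.
  rewrite (_ : (3*k+4 = ((4 + k) + k) + k)%N); last by lia.
  rewrite !per //; lia.
have G5 : q 5%N + q 4%N + q 3%N + q 2%N = 0.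
  have := G (3*k+5)%N ltac:(lia).
  rewrite (_ : (3*k+5 - 3*k.+1 = 2)%N); last by lia.
  rewrite (_ : (3*k+5 - 2*k.+1 = 3 + k)%N); last by lia.
  rewrite (_ : (3*k+5 - k.+1 = (4 + k) + k)%N); last by lia.
  rewrite (_ : (3*k+5 = ((5 + k) + k) + k)%N); last by lia.
  rewrite !per //; lia.
case: (ltngtP k 1) => hk1; first by lia.
2:{ subst k.
    have e : forall i, (1 <= i <= 7)%N -> q i = q 1%N.
      elim => // i IH hi. case: (posnP i) => [->//|ip].
      rewrite -addn1 per; last by lia. by apply: IH; lia.
    have : q 1%N = 0.
      move: G4; rewrite (e 4%N) // (e 3%N) // (e 2%N) // => h. lra.
    move=> h1; rewrite (_ : j = 1%N) //; lia. }
have Wk3 : q 3%N + q 2%N + q 1%N = 0.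
  have := W (k+3)%N ltac:(lia).
  rewrite (_ : (k+3-1 = 2 + k)%N); last by lia.
  rewrite (_ : (k+3-2 = 1 + k)%N); last by lia.
  rewrite addnC !per //; lia.
have W5 := W 5%N ltac:(lia).
have q4 : q 4%N = 0 by lra.
have q2 : q 2%N = 0 by lra.
have tri : forall j, (3 <= j)%N -> (j + 3 <= k + 3)%N -> q (j+3)%N = q j.
  move=> i h1 h2.
  have := W (i+3)%N ltac:(lia). have := W (i+2)%N ltac:(lia).
  rewrite (_ : (i+2-1 = i+1)%N); last by lia.
  rewrite (_ : (i+2-2 = i)%N); last by lia.
  rewrite (_ : (i+3-1 = i+2)%N); last by lia.
  rewrite (_ : (i+3-2 = i+1)%N); last by lia.
  move=> ha hb; lra.
have triN : forall i s, (s < 3)%N -> (3 + 3*i + s <= k+3)%N -> q (3 + 3*i + s)%N = q (3 + s)%N.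
  elim=> [|i IH] s hs hle; first by rewrite muln0 addn0.
  rewrite (_ : (3 + 3*i.+1 + s = (3 + 3*i + s) + 3)%N); last by lia.
  rewrite tri; [apply: IH|..]; lia.
have q5 : q 5%N = - q 3%N by move: W5; rewrite q4 /= => h; lra.
have q3 : q 3%N = 0.
  have hk := divn_eq k 3. have hs := ltn_pmod k (isT : (0 < 3)%N).
  move: hs hk; set t := (k %/ 3)%N; set s := (k %% 3)%N => hs hk.
  case: s hs hk => [|[|[|s]]] // _ hk.
  - have := triN t.-1 2%N isT ltac:(lia).
    rewrite (_ : (3 + 3 * t.-1 + 2 = 2 + k)%N); last by lia.
    rewrite per; last lia. rewrite q2 q5 => h; lra.
  - have := triN t 1%N isT ltac:(lia).
    rewrite (_ : (3 + 3 * t + 1 = 3 + k)%N); last by lia.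
    rewrite per; last lia. rewrite q4 => h; lra.
  - have := triN t 2%N isT ltac:(lia).
    rewrite (_ : (3 + 3 * t + 2 = 3 + k)%N); last by lia.
    rewrite per; last lia. rewrite q5 => h; lra.
case: (ltnP j 3) => hj3.
  case: j hj hj3 => [|[|[|j]]] // _ _; lra.
have := triN ((j - 3) %/ 3)%N ((j-3) %% 3)%N (ltn_pmod _ (isT : (0 < 3)%N)) ltac:(lia).
rewrite (_ : (3 + 3 * ((j - 3) %/ 3) + (j - 3) %% 3 = j)%N); last by lia.
move=> ->.
have := ltn_pmod (j - 3)%N (isT : (0 < 3)%N).
case: ((j-3) %% 3)%N => [|[|[|s]]] // _ /=; rewrite ?q3 ?q4 ?q5 ?q3 //; lra.
Qed.

Lemma Aent (n k : nat) (i j : 'I_n) :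
  Amat n k i j = (i < j)%N%:R - (i < j - k)%N%:R - (i < j + k + 1)%N%:R + (i < j + 1)%N%:R.
Proof.
rewrite /Amat mxE.
case: (ltngtP i j) => h.
- case: (leqP (j - i) k) => h2.
  + rewrite (_ : (i < j - k)%N = false); last by apply/negbTE; lia.
    rewrite (_ : (i < j + k + 1)%N = true); last by lia.
    rewrite (_ : (i < j + 1)%N = true); last by lia. rewrite /=; ring.
  + rewrite (_ : (i < j - k)%N = true); last by lia.
    rewrite (_ : (i < j + k + 1)%N = true); last by lia.
    rewrite (_ : (i < j + 1)%N = true); last by lia. rewrite /=; ring.
- rewrite (_ : (i < j - k)%N = false); last by apply/negbTE; lia.
  rewrite (_ : (i < j + 1)%N = false); last by apply/negbTE; lia.
  case: (leqP (i - j) k) => h2.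
  + rewrite (_ : (i < j + k + 1)%N = true); last by lia. rewrite /=; ring.
  + rewrite (_ : (i < j + k + 1)%N = false); last by apply/negbTE; lia. rewrite /=; ring.
- rewrite h /=.
  rewrite (_ : (j < j - k)%N = false); last by apply/negbTE; lia.
  rewrite (_ : (j < j + k + 1)%N = true); last by lia.
  rewrite (_ : (j < j + 1)%N = true); last by lia. rewrite /=; ring.
Qed.

Lemma main_ker (k : nat) (u : 'rV[rat]_(2*k+5)) : (1 <= k)%N ->
  u *m Amat (2*k+5) k = 0 -> u *m (const_mx 1 : 'cV[rat]_(2*k+5)) = 0 -> u = 0.
Proof.
move=> k1 hA h1.
pose P (m : nat) := \sum_(i < 2*k+5) u 0 i * (i < m)%N%:R.
have HE : forall j, (j < 2*k+5)%N -> P j - P (j - k)%N - P (j+k+1)%N + P (j+1)%N = 0.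
  move=> j hj.
  have := congr1 (fun M : 'rV[rat]_(2*k+5) => M 0 (Ordinal hj)) hA.
  rewrite !mxE => <-.
  rewrite /P -!sumrB -big_split /=; apply: eq_bigr => i _.
  rewrite Aent /=; ring.
have P0 : P 0%N = 0 by rewrite /P big1 // => i _; rewrite ltn0 mulr0.
have PT : forall m, (2*k+5 <= m)%N -> P m = 0.
  move=> m hm; have := congr1 (fun M : 'M[rat]_1 => M 0 0) h1; rewrite !mxE => <-.
  apply: eq_bigr => i _; rewrite mxE (_ : (i < m)%N = true) //.
  by apply: leq_trans (ltn_ord i) hm.
have Pz := @pure k P k1 P0 PT HE.
apply/rowP => i; rewrite mxE.
have : P i.+1 - P i = u 0 i.
  rewrite /P -sumrB (bigD1 i) //= big1 ?addr0.
    by rewrite ltnS leqnn ltnn /=; ring.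
  move=> l hl; rewrite ltnS leq_eqVlt.
  have hl' : (nat_of_ord l == nat_of_ord i) = false by exact: negbTE hl.
  by rewrite hl' /=; ring.
by rewrite !Pz subrr => <-.
Qed.

Theorem theorem8p5 (k : nat) : (1 <= k)%N -> Nnull (2 * k + 5) k = 1%N.
Proof.
move=> k1.
have hT : (Amat (2*k+5) k)^T = - Amat (2*k+5) k.
  apply/matrixP => i j; rewrite !mxE.
  by case: (ltngtP i j) => h /=; try case: ifP; rewrite ?opprK ?oppr0.

have hdet : \det (Amat (2*k+5) k) = 0.
  have := det_tr (Amat (2*k+5) k).
  rewrite hT -scaleN1r detZ -signr_odd oddD oddM /= => h; lra.
have rk : (\rank (Amat (2*k+5) k) < 2*k+5)%N.
  rewrite ltn_neqAle rank_leq_row andbT; apply/negP => /eqP h.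
  have : row_free (Amat (2*k+5) k) by rewrite /row_free h.
  by rewrite row_free_unit unitmxE hdet unitr0.
rewrite /Nnull -mxrank_ker.
apply/eqP; rewrite eqn_leq; apply/andP; split; last first.
  by rewrite mxrank_ker subn_gt0.
have := mxrank_mul_ker (kermx (Amat (2*k+5) k)) (const_mx 1 : 'cV[rat]_(2*k+5)).
set C := (kermx _ :&: kermx _)%MS.
have C0 : C = 0.
  apply/row_matrixP => i; rewrite row0.
  apply: (@main_ker k (row i C) k1).
    apply/sub_kermxP; exact: submx_trans (row_sub i C) (capmxSl _ _).
  apply/sub_kermxP; exact: submx_trans (row_sub i C) (capmxSr _ _).
rewrite C0 mxrank0 addn0 => <-; exact: rank_leq_col.
Qed.
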